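(* Let $\Gamma$ be a rationally metrised graph and $N\colon\mathrm H^1(\Gamma)\xrightarrow{\sim}\mathrm H_1(\Gamma)$ the isomorphism induced by the cycle pairing. For every edge $e$ of $\Gamma$, \[N(e^* )=\sum_{e'\in E^+}\lambda_{e,e'}\,e'\in\mathbb Q\cdot E^\pm,\qquad \lambda_{e,e'}=\begin{cases}\frac1{\ell(e)}-\frac{\langle\partial(e),\partial(e)\rangle}{\ell(e)^2}&\text{if }e'=e,\\ -\frac{\langle\partial(e),\partial(e')\rangle}{\ell(e)\ell(e')}&\text{if }e'\ne e^{\pm1}.\end{cases}\]
   Context: Rationally metrised graph: finite sets of vertices $V$, oriented edges $E$, half-edges, source $s$, fixed-point-free involution $e\mapsto e^{-1}$ on $E$, $t(e)=s(e^{-1})$, connected, lengths $\ell(e)=\ell(e^{-1})\in\mathbb Q_{>0}$. $E^+$ is the set of unoriented edges ($E$ modulo $e\sim e^{-1}$), each represented by a chosen orientation. $\mathbb Q\cdot E^\pm$ is the span of $E$ mod $e^{-1}=-e$ with edges orthogonal and $\langle e,e\rangle=\ell(e)$; $\partial(e)=t(e)-s(e)\in\mathrm{Div}^0(\Gamma)$ (divisors of total mass $0$); $\mathrm H_1(\Gamma)=\ker\partial$ with restricted (cycle) pairing and $\mathrm H^1(\Gamma)=\mathrm{Hom}(\mathrm H_1(\Gamma),\mathbb Q)$; $N(\xi)$ is the unique class with $\langle N(\xi),\omega\rangle=\xi(\omega)$ for all $\omega\in\mathrm H_1$. $e^*\in\mathrm H^1(\Gamma)$ gives the multiplicity of $e$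 in a homology class. $\langle\cdot,\cdot\rangle$ on $\mathrm{Div}^0$ is the height pairing ${}^t\mathbf uL^{-1}\mathbf v$ with $L$ the Laplacian matrix ($L_{uu}=\sum_{s(e)=u\ne t(e)}1/\ell(e)$, $L_{uv}=-\sum_{s(e)=u,t(e)=v}1/\ell(e)$ for $u\neq v$). *)

(* Defs.v *)
From HB Require Import structures.
From mathcomp Require Import all_boot all_order all_algebra.
Set Implicit Arguments. Unset Strict Implicit. Unset Printing Implicit Defensive.
Import Order.TTheory GRing.Theory Num.Theory.
Local Open Scope ring_scope.

(* A rationally metrised graph: vertices 'I_n, oriented edges a finType E,
   source s, fixed-point-free involution inv, lengths ell. *)
Section MetrisedGraph.
Variables (n : nat) (E : finType) (s : E -> 'I_n) (inv : E -> E) (ell : E -> rat).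

Definition tgt (e : E) : 'I_n := s (inv e).

Definition is_involution_fpf : Prop :=
  (forall e, inv (inv e) = e) /\ (forall e, inv e != e).

Definition adj : rel 'I_n := fun u v => [exists e, (s e == u) && (tgt e == v)].
Definition connected_graph : Prop := forall u v : 'I_n, connect adj u v.

Definition good_lengths : Prop :=
  (forall e, 0 < ell e) /\ (forall e, ell (inv e) = ell e).

(* Q.E^{+-}: rational functions on oriented edges with x(e^-1) = - x(e) *)
Definition antisym (x : {ffun E -> rat}) : bool :=
  [forall e, x (inv e) == - x e].

(* the class of the oriented edge e' in Q.E^{+-} *)
Definition edgevec (e' : E) : {ffun E -> rat} :=
  [ffun a => (a == e')%:R - (a == inv e')%:R].

(* cycle pairing: edges orthogonal, <e,e> = ell e (each unoriented edge
   is counted twice in the sum over oriented edges, hence the 1/2) *)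
Definition epair (x y : {ffun E -> rat}) : rat :=
  2^-1 * \sum_(a : E) ell a * x a * y a.

(* divisors as row vectors indexed by vertices *)
Definition bdry (x : {ffun E -> rat}) : 'rV[rat]_n :=
  \row_(v < n) \sum_(a : E | tgt a == v) x a.

Definition bdry_edge (e : E) : 'rV[rat]_n :=
  \row_(v < n) ((v == tgt e)%:R - (v == s e)%:R).

Definition in_H1 (x : {ffun E -> rat}) : bool := antisym x && (bdry x == 0).

Definition laplacian : 'M[rat]_n :=
  \matrix_(u < n, v < n)
    if u == v then \sum_(a : E | (s a == u) && (tgt a != u)) (ell a)^-1
    else - \sum_(a : E | (s a == u) && (tgt a == v)) (ell a)^-1.

(* height pairing  ^t u L^{-1} v  on Div^0 (L^{-1} realised by the
   pseudo-inverse: w := v L^+ satisfies w L = v for v of degree 0) *)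
Definition hpair (u v : 'rV[rat]_n) : rat :=
  (u *m (v *m pinvmx laplacian)^T) 0 0.

Definition lambda (e e' : E) : rat :=
  if e' == e then (ell e)^-1 - hpair (bdry_edge e) (bdry_edge e) / (ell e ^+ 2)
  else - hpair (bdry_edge e) (bdry_edge e') / (ell e * ell e').

(* E^+ : a set of representatives, exactly one orientation per edge *)
Definition orientation (Eplus : {set E}) : Prop :=
  forall e, (e \in Eplus) != (inv e \in Eplus).

(* x is N(e^* ): the class in H_1 with <x, w> = e^*(w) = w(e) for all w in H_1 *)
Definition is_N_estar (e : E) (x : {ffun E -> rat}) : Prop :=
  in_H1 x /\ forall w, in_H1 w -> epair x w = w e.

End MetrisedGraph.

(* Main.v *)
Require Import Defs.
From HB Require Import structures.
From mathcomp Require Import all_boot all_order all_algebra.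
From mathcomp Require Import ring lra zify.
Set Implicit Arguments. Unset Strict Implicit. Unset Printing Implicit Defensive.
Import Order.TTheory GRing.Theory Num.Theory.
Local Open Scope ring_scope.

Lemma sum_delta (T : finType) (F : T -> rat) (c : T) :
  \sum_v F v * (v == c)%:R = F c.
Proof.
rewrite (bigD1 c) //= eqxx mulr1 big1 ?addr0 // => v /negbTE ->; by rewrite mulr0.
Qed.

Section G.
Variables (n : nat) (E : finType) (s : E -> 'I_n) (inv : E -> E) (ell : E -> rat).
Hypothesis Hinv : is_involution_fpf inv.
Hypothesis Hell : good_lengths inv ell.

Local Notation t := (tgt s inv).
Local Notation L := (laplacian s inv ell).

Lemma invK : cancel inv inv. Proof. by case: Hinv. Qed.
Lemma inv_inj : injective inv. Proof. exact: can_inj invK. Qed.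
Lemma tgt_inv a : t (inv a) = s a. Proof. by rewrite /tgt invK. Qed.
Lemma s_inv a : s (inv a) = t a. Proof. by []. Qed.
Lemma ell_inv a : ell (inv a) = ell a. Proof. by case: Hell. Qed.
Lemma ell_gt0 a : 0 < ell a. Proof. by case: Hell. Qed.
Lemma ell_neq0 a : ell a != 0. Proof. by rewrite gt_eqF ?ell_gt0. Qed.

Lemma sum_inv (F : E -> rat) : \sum_a F (inv a) = \sum_a F a.
Proof. by rewrite [RHS](reindex_inj inv_inj). Qed.

Lemma L_entry u v : L u v =
  \sum_a (ell a)^-1 * ((s a == u)%:R * ((s a == v)%:R - (t a == v)%:R)).
Proof.
rewrite /laplacian mxE; case: eqVneq => [<-|nuv].
  rewrite big_mkcond; apply: eq_bigr => a _ /=.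
  by case: (s a == u); case: (t a == u); rewrite /=; ring.
rewrite -sumrN big_mkcond; apply: eq_bigr => a _ /=.
case: (eqVneq (s a) u) => [sa|nsa]; last by rewrite /= !mul0r mulr0.
rewrite sa (negbTE nuv) /=; case: (t a == v); rewrite /=; ring.
Qed.

Lemma L_sym u v : L u v = L v u.
Proof.
rewrite !L_entry.
have H : forall x y, \sum_a (ell a)^-1 * ((s a == x)%:R * ((s a == y)%:R - (t a == y)%:R)) =
  \sum_a (ell a)^-1 * ((s a == x)%:R * (s a == y)%:R) -
  \sum_a (ell a)^-1 * ((s a == x)%:R * (t a == y)%:R).
  move=> x y; rewrite -sumrB; apply: eq_bigr => a _; ring.
rewrite !H; congr (_ - _).
  by apply: eq_bigr => a _ /=; rewrite [X in _ * X]mulrC.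
by rewrite -sum_inv; apply: eq_bigr => a _ /=; rewrite ell_inv tgt_inv /tgt [X in _ * X]mulrC.
Qed.

Lemma L_tr : L^T = L.
Proof. by apply/matrixP => u v; rewrite mxE L_sym. Qed.

Lemma mulL (x : 'rV[rat]_n) v : (x *m L) 0 v =
  \sum_a (ell a)^-1 * x 0 (s a) * ((s a == v)%:R - (t a == v)%:R).
Proof.
rewrite mxE.
under eq_bigr => u _ do rewrite L_entry mulr_sumr.
rewrite exchange_big /=; apply: eq_bigr => a _.
rewrite (bigD1 (s a)) //= eqxx big1 ?addr0.
  by rewrite [true%:R]/= mul1r mulrA [x 0 _ * _]mulrC.
by move=> u; rewrite eq_sym => /negbTE ->; rewrite mul0r mulr0 mulr0.
Qed.


Lemma sum_delta1 (T : finType) (c : T) : \sum_(v : T) (v == c)%:R = 1 :> rat.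
Proof. by rewrite (bigD1 c) //= eqxx big1 ?addr0 // => v /negbTE ->. Qed.

Lemma sum_deltaC (T : finType) (F : T -> rat) (c : T) :
  \sum_v (c == v)%:R * F v = F c.
Proof. by rewrite -[RHS](sum_delta F c); apply: eq_bigr => v _; rewrite eq_sym mulrC. Qed.

Lemma inner_delta (c : rat) (f : 'I_n -> rat) (x y : 'I_n) :
  \sum_i c * ((x == i)%:R - (y == i)%:R) * f i = c * (f x - f y).
Proof.
transitivity (\sum_i (c * ((x == i)%:R * f i) - c * ((y == i)%:R * f i))).
  by apply: eq_bigr => i _; rewrite -mulrA mulrBl mulrBr.
by rewrite sumrB -!mulr_sumr !sum_deltaC mulrBr.
Qed.

Local Notation ones := (const_mx 1 : 'rV[rat]_n).

Lemma ones_L : ones *m L = 0.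
Proof.
apply/matrixP => i v; rewrite ord1 mulL !mxE.
under eq_bigr do rewrite mxE mulr1 mulrBr.
rewrite sumrB; apply/eqP; rewrite subr_eq0 -sum_inv; apply/eqP/eq_bigr => a _.
by rewrite ell_inv.
Qed.

Lemma L_ones : L *m ones^T = 0.
Proof. by rewrite -{1}L_tr -trmx_mul ones_L trmx0. Qed.

Lemma ker_edge (r : 'rV[rat]_n) : r *m L = 0 -> forall a, r 0 (s a) = r 0 (t a).
Proof.
move=> hr.
have H v : \sum_a (ell a)^-1 * r 0 (s a) * ((s a == v)%:R - (t a == v)%:R) = 0.
  by rewrite -mulL hr mxE.
have S1 : \sum_a (ell a)^-1 * r 0 (s a) * (r 0 (s a) - r 0 (t a)) = 0.
  transitivity (\sum_v (\sum_a (ell a)^-1 * r 0 (s a) * ((s a == v)%:R - (t a == v)%:R)) * r 0 v);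
    last by rewrite big1 // => v _; rewrite H mul0r.
  symmetry.
  under eq_bigr do rewrite mulr_suml.
  rewrite exchange_big /=; apply: eq_big => // a _.
  exact: inner_delta.
have S2 : \sum_a (ell a)^-1 * r 0 (t a) * (r 0 (t a) - r 0 (s a)) = 0.
  by rewrite -[in RHS]S1 -[in RHS]sum_inv; apply: eq_bigr => a _; rewrite ell_inv tgt_inv.
have S : \sum_a (ell a)^-1 * (r 0 (s a) - r 0 (t a)) ^+ 2 = 0.
  transitivity (\sum_a (ell a)^-1 * r 0 (s a) * (r 0 (s a) - r 0 (t a)) +
     \sum_a (ell a)^-1 * r 0 (t a) * (r 0 (t a) - r 0 (s a))); last by rewrite S1 S2 addr0.
  rewrite -big_split /=; apply: eq_bigr => a _.
  rewrite expr2; ring.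
have pos : forall b, true -> 0 <= (ell b)^-1 * (r 0 (s b) - r 0 (t b)) ^+ 2.
  by move=> b _; rewrite mulr_ge0 ?sqr_ge0 // invr_ge0 ltW ?ell_gt0.
move=> a; move/(psumr_eq0P pos): S => /(_ a isT) /eqP.
by rewrite mulf_eq0 invr_eq0 (negbTE (ell_neq0 a)) /= sqrf_eq0 subr_eq0 => /eqP.
Qed.

Hypothesis Hconn : connected_graph s inv.

Lemma ker_const (r : 'rV[rat]_n) : r *m L = 0 -> forall u v, r 0 u = r 0 v.
Proof.
move=> hr u v; have /connectP [p] := Hconn u v.
elim: p u => [|y p IH] u /=; first by move=> _ ->.
case/andP => /existsP [a /andP [/eqP sa /eqP ta]] hp hv.
by rewrite -sa (ker_edge hr a) ta; apply: IH.
Qed.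

Lemma kerL_sub (v0 : 'I_n) : (kermx L <= ones)%MS.
Proof.
apply/row_subP => i; set r := row i (kermx L).
have hr : r *m L = 0 by rewrite /r -row_mul mulmx_ker row0.
have -> : r = r 0 v0 *: ones.
  apply/matrixP => j k; rewrite ord1 [RHS]mxE [const_mx _ _ _]mxE mulr1; exact: ker_const.
exact: scalemx_sub.
Qed.

Lemma rowspace (v0 : 'I_n) (x : 'rV[rat]_n) : x *m ones^T = 0 -> (x <= L)%MS.
Proof.
move=> hx.
have ones0 : ones != 0.
  by apply/negP => /eqP/matrixP/(_ 0 v0); rewrite !mxE => /eqP; rewrite oner_eq0.
have rk1 : (\rank (kermx L) <= 1)%N.
  by apply: leq_trans (mxrankS (kerL_sub v0)) _; exact: rank_leq_row.
have hD : \rank (kermx (ones^T)) = (n - 1)%N by rewrite mxrank_ker mxrank_tr rank_rV ones0.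
have LD : (L <= kermx (ones^T))%MS by apply/sub_kermxP; exact: L_ones.
have DL : (kermx (ones^T) <= L)%MS.
  rewrite -(geq_leqif (mxrank_leqif_sup LD)) hD.
  move: rk1; rewrite mxrank_ker.
  have : (\rank L <= n)%N by exact: rank_leq_col.
  move: (\rank L) => k; clear; lia.
by apply: submx_trans DL; apply/sub_kermxP.
Qed.

Local Notation ev := (edgevec inv).
Local Notation be := (bdry_edge s inv).

Lemma H1_antisym (z : {ffun E -> rat}) : in_H1 s inv z -> forall a, z (inv a) = - z a.
Proof. by case/andP => /forallP H _ a; apply/eqP/H. Qed.

Lemma H1_bdry (z : {ffun E -> rat}) : in_H1 s inv z -> forall v, \sum_(a | t a == v) z a = 0.
Proof. by case/andP => _ /eqP/matrixP H v; have := H 0 v; rewrite !mxE. Qed.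

Lemma mk_H1 (z : {ffun E -> rat}) : (forall a, z (inv a) = - z a) ->
  (forall v, \sum_(a | t a == v) z a = 0) -> in_H1 s inv z.
Proof.
move=> H1 H2; apply/andP; split; first by apply/forallP => a; rewrite H1.
by apply/eqP/matrixP => i v; rewrite !mxE H2.
Qed.

Lemma be_ones e : be e *m ones^T = 0.
Proof.
apply/matrixP => i j; rewrite [RHS]mxE mxE.
under eq_bigr do rewrite !mxE mulr1.
by rewrite sumrB !sum_delta1 subrr.
Qed.

Lemma hwL e : be e *m pinvmx L *m L = be e.
Proof. exact/mulmxKpV/(rowspace (s e))/be_ones. Qed.

Definition ent (w : 'rV[rat]_n) (v : 'I_n) : rat := w 0 v.

Lemma mul_be_tr (y : 'rV[rat]_n) e : (y *m (be e)^T) 0 0 = ent y (t e) - ent y (s e).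
Proof.
rewrite mxE; under eq_bigr do rewrite !mxE mulrBr.
by rewrite sumrB !sum_delta.
Qed.

Lemma hpair_eq e e' : hpair s inv ell (be e) (be e') =
  ent (be e *m pinvmx L) (t e') - ent (be e *m pinvmx L) (s e').
Proof.
have h : L *m (be e' *m pinvmx L)^T = (be e')^T.
  by rewrite -{2}(hwL e') [RHS]trmx_mul L_tr.
by rewrite /hpair -{1}(hwL e) -mulmxA h mul_be_tr.
Qed.

Definition chi (w : 'rV[rat]_n) (a : E) := (ent w (t a) - ent w (s a)) / ell a.

Lemma chi_inv w a : chi w (inv a) = - chi w a.
Proof. by rewrite /chi tgt_inv ell_inv /= -mulNr opprB. Qed.

Lemma lambda_eq e e' : lambda s inv ell e e' =
  (e' == e)%:R / ell e - chi (be e *m pinvmx L) e' / ell e.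
Proof.
rewrite /lambda !hpair_eq /chi; have := ell_neq0 e; have := ell_neq0 e'.
move: (be e *m pinvmx L) => w.
case: (eqVneq e' e) => [->|ne] h1 h2; rewrite ?eqxx ?(negbTE ne) /=.
  by field.
by field; rewrite h1 h2.
Qed.

Lemma fpf a : (inv a == a) = false.
Proof. by case: Hinv => _ h; apply/negbTE. Qed.

Lemma orient_sum (Eplus : {set E}) (HE : orientation inv Eplus)
  (g : E -> rat) (hg : forall a, g (inv a) = - g a) a :
  \sum_(e' in Eplus) g e' * ev e' a = g a.
Proof.
have HEa := HE a.
case: (boolP (a \in Eplus)) => ha.
  rewrite (bigD1 a) //= big1 ?addr0.
    by rewrite ffunE eqxx eq_sym fpf subr0 mulr1.
  move=> e' /andP [he' ne']; rewrite ffunE eq_sym (negbTE ne').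
  case: (eqVneq a (inv e')) => [ae|_]; last by rewrite subrr mulr0.
  by move: HEa ha; rewrite ae invK he'; case: (inv e' \in Eplus).
have hia : inv a \in Eplus by move: HEa; rewrite (negbTE ha); case: (inv a \in Eplus).
rewrite (bigD1 (inv a)) //= big1 ?addr0.
  by rewrite ffunE invK eqxx eq_sym fpf sub0r mulrN1 hg opprK.
move=> e' /andP [he' ne']; rewrite ffunE.
have -> : (a == e') = false by apply/negbTE; apply: contraNneq ha => ->.
have -> : (a == inv e') = false.
  by apply/negbTE; apply: contra ne' => /eqP ->; rewrite invK.
by rewrite subrr mulr0.
Qed.

Lemma mulL' (x : 'rV[rat]_n) v : ent (x *m L) v =
  \sum_a (ell a)^-1 * ent x (s a) * ((s a == v)%:R - (t a == v)%:R).
Proof. exact: mulL. Qed.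

Lemma sum_t (F : E -> rat) v :
  \sum_(a | t a == v) F a = \sum_a (t a == v)%:R * F a.
Proof.
rewrite big_mkcond; apply: eq_bigr => a _.
by case: (t a == v); rewrite ?mul1r ?mul0r.
Qed.

Definition W e := be e *m pinvmx L.
Definition Nf e := [ffun a => (ev e a - chi (W e) a) / ell e].

Lemma Ne_eq (Eplus : {set E}) (HE : orientation inv Eplus) e (He : e \in Eplus) :
  [ffun a => \sum_(e' in Eplus) lambda s inv ell e e' * ev e' a] = Nf e.
Proof.
apply/ffunP => a; rewrite !ffunE.
under eq_bigr do rewrite lambda_eq mulrBl.
rewrite sumrB (bigD1 e) //= eqxx big1 ?addr0.
  rewrite -/(W e).
  rewrite (orient_sum HE (g := fun e' => chi (W e) e' / ell e)); last first.
    by move=> b; rewrite chi_inv mulNr.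
  by rewrite mul1r mulrBl [_ * ev e a]mulrC ffunE.
by move=> e' /andP [_ ne]; rewrite (negbTE ne) !mul0r.
Qed.

Lemma ev_inv e a : ev e (inv a) = - ev e a.
Proof.
rewrite !ffunE (inj_eq inv_inj).
have -> : (inv a == e) = (a == inv e) by rewrite -(inj_eq inv_inj) invK.
by rewrite opprB.
Qed.

Lemma sum_ev e v : \sum_(a | t a == v) ev e a = ent (be e) v.
Proof.
rewrite sum_t /ent mxE.
under eq_bigr do rewrite ffunE mulrBr.
by rewrite sumrB !sum_delta tgt_inv eq_sym [(s e == v)]eq_sym.
Qed.

Lemma sum_chi e v : \sum_(a | t a == v) chi (W e) a = ent (be e) v.
Proof.
rewrite -(hwL e) -/(W e) mulL' sum_t -sum_inv.
under [RHS]eq_bigr do rewrite mulrBr.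
rewrite [RHS]sumrB -[X in _ = _ - X]sum_inv -sumrB; apply: eq_bigr => a _.
rewrite tgt_inv chi_inv ell_inv /chi.
have := ell_neq0 a; move: (ell a) => l hl.
by rewrite /=; field.
Qed.

Lemma Nf_val e a : Nf e a = (ev e a - chi (W e) a) / ell e.
Proof. by rewrite /Nf ffunE. Qed.

Lemma Nf_H1 e : in_H1 s inv (Nf e).
Proof.
apply: mk_H1 => [a|v].
  by rewrite !Nf_val ev_inv chi_inv -opprD mulNr.
under eq_bigr do rewrite Nf_val.
rewrite -big_distrl /=.
by rewrite sumrB sum_ev sum_chi subrr mul0r.
Qed.

Lemma sumW_t e (z : {ffun E -> rat}) : in_H1 s inv z ->
  \sum_a ent (W e) (t a) * z a = 0.
Proof.
move=> hz.
transitivity (\sum_a \sum_v ent (W e) v * ((t a == v)%:R * z a)).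
  apply: eq_bigr => a _; rewrite -(sum_deltaC (ent (W e)) (t a)) mulr_suml.
  by apply: eq_bigr => v _; rewrite -mulrA mulrCA.
rewrite exchange_big /=; apply: big1 => v _.
by rewrite -mulr_sumr -sum_t H1_bdry // mulr0.
Qed.

Lemma Nf_pair e (z : {ffun E -> rat}) : in_H1 s inv z -> epair ell (Nf e) z = z e.
Proof.
move=> hz; rewrite /epair.
have E1 : \sum_a ell a * ev e a * z a = ell e * z e + ell e * z e.
  transitivity (\sum_a ((ell a * z a) * (a == e)%:R - (ell a * z a) * (a == inv e)%:R)).
    by apply: eq_bigr => a _; rewrite ffunE; ring.
  by rewrite sumrB !sum_delta ell_inv (H1_antisym hz) mulrN opprK.
have E2 : \sum_a (ent (W e) (t a) - ent (W e) (s a)) * z a = 0.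
  under eq_bigr do rewrite mulrBl.
  rewrite sumrB -[X in _ - X]sum_inv.
  under [X in _ - X]eq_bigr do rewrite (H1_antisym hz) mulrN.
  by rewrite /= sumrN opprK sumW_t // addr0.
transitivity (2^-1 * ((\sum_a ell a * ev e a * z a -
     \sum_a (ent (W e) (t a) - ent (W e) (s a)) * z a) / ell e)).
  congr (_ * _); rewrite -sumrB mulr_suml; apply: eq_bigr => a _.
  rewrite Nf_val /chi; have := ell_neq0 a; have := ell_neq0 e.
  by move: (ell a) (ell e) => l1 l2 h1 h2; field; rewrite h1 h2.
transitivity (2^-1 * ((ell e * z e + ell e * z e - 0) / ell e)).
  by congr (_ * ((_ - _) / _)); [exact: E1 | exact: E2].
have := ell_neq0 e; move: (ell e) (z e) => l x hl; by field.
Qed.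

Lemma Nf_unique e (y : {ffun E -> rat}) : is_N_estar s inv ell e y -> y = Nf e.
Proof.
case=> Hy Hpy.
pose d := [ffun a => y a - Nf e a].
have dv : forall a, d a = y a - Nf e a by move=> a; rewrite /d ffunE.
have Hd : in_H1 s inv d.
  apply: mk_H1 => [a|v]; rewrite ?dv.
    rewrite (H1_antisym Hy) (H1_antisym (Nf_H1 e)); ring.
  under eq_bigr do rewrite dv.
  by rewrite sumrB (H1_bdry Hy) (H1_bdry (Nf_H1 e)) subrr.
have Hdd : epair ell d d = 0.
  transitivity (epair ell y d - epair ell (Nf e) d); last first.
    by rewrite Hpy // Nf_pair // subrr.
  rewrite /epair -mulrBr -sumrB; congr (_ * _); apply: eq_bigr => a _.
  by rewrite dv; ring.
have S : \sum_a ell a * d a * d a = 0.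
  by move: Hdd; rewrite /epair => /eqP; rewrite mulf_eq0 invr_eq0 => /orP [//|/eqP].
have pos : forall a, true -> 0 <= ell a * d a * d a.
  move=> a _; rewrite -mulrA; apply: mulr_ge0; [exact: ltW (ell_gt0 a) | by rewrite -expr2 sqr_ge0].
apply/ffunP => a; move/(psumr_eq0P pos): S => /(_ a isT) /eqP.
rewrite !mulf_eq0 (negbTE (ell_neq0 a)) orbb /= dv subr_eq0 => /eqP.
by [].
Qed.

End G.

Unset Implicit Arguments.
Set Strict Implicit.

Theorem corollary7p3 (n : nat) (E : finType) (s : E -> 'I_n) (inv : E -> E)
    (ell : E -> rat)
    (Hinv : is_involution_fpf inv) (Hconn : connected_graph s inv)
    (Hell : good_lengths inv ell)
    (Eplus : {set E}) (HEplus : orientation inv Eplus)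
    (e : E) (He : e \in Eplus) :
  let Ne := [ffun a => \sum_(e' in Eplus) lambda s inv ell e e' * edgevec inv e' a] in
  is_N_estar s inv ell e Ne /\
  (forall y, is_N_estar s inv ell e y -> y = Ne).
Proof.
move=> Ne; rewrite /Ne (Ne_eq Hinv Hell Hconn HEplus He).
split; first split.
- exact: Nf_H1.
- move=> z hz; exact: Nf_pair.
- move=> y; exact: Nf_unique.
Qed.
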